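(* Let $i\ge0$, let $\mathbf{e}_i$ be a 1-dimensional error pattern at level $i$, and let $\mathbf{e}_{i+2}$ be a 1-dimensional second preimage of $\mathbf{e}_i$, i.e. a pattern at level $i+2$ whose image after two successive reduction stages is $\mathbf{e}_i$. Then $\mathrm{wt}(\mathbf{e}_{i+2})\ge2\,\mathrm{wt}(\mathbf{e}_i)$.
   Context: 1-dimensional model. For $j\ge0$, the line at level $j$ is the cycle with vertex set $\mathbb{Z}/2^j\mathbb{Z}$ and edges $\{v,v+1\}$, $v\in\mathbb{Z}/2^j\mathbb{Z}$ (for $j=0$, one vertex with a loop edge). A 1-dimensional error pattern at level $j$ is a subset of these edges; $\mathrm{wt}$ is its number of edges; its syndrome is the set of vertices incident to an odd number of its edges. At level $j+1$, block $m\in\mathbb{Z}/2^j\mathbb{Z}$ consists of the left edge $\{2m,2m+1\}$ and right edge $\{2m+1,2m+2\}$ and corresponds to the edge $\{m,m+1\}$ at level $j$. One reduction stage applied to a pattern $\mathbf{f}$ at level $j+1$ with syndrome $S$: (a) for every block, if $2m+1,2m+2\in S$, flip (add mod 2) the right edge and remove both from $S$; (b) then for every block, if $2m+1$ is still in $S$, flip the left edge. In the resulting pattern $\mathbf{f}'$ each block contains $0$ or $2$ edges; the image of $\mathbf{f}$ is the pattern at level $j$ containing $\{m,m+1\}$ iff block $m\subseteq\mathbf{f}'$. *)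

(* Defs.v *)
From mathcomp Require Import all_boot.
Set Implicit Arguments. Unset Strict Implicit. Unset Printing Implicit Defensive.

(* Level j: cycle on vertices Z/2^j; edge v (v : 'I_(2^j)) is {v, v+1}.
   Edges are indexed by their "left" vertex, so at level 1 the two edges
   {0,1},{1,0} are distinct parallel edges and at level 0 the single edge is
   a loop at 0. *)

Lemma pow2_gt0 (j : nat) : 0 < 2 ^ j.
Proof. by rewrite expn_gt0. Qed.

Definition modI (j k : nat) : 'I_(2 ^ j) := Ordinal (ltn_pmod k (pow2_gt0 j)).

Definition pattern (j : nat) := {set 'I_(2 ^ j)}.

Definition wt (j : nat) (f : pattern j) : nat := #|f|.

(* Vertex u is incident to edges u ({u,u+1}) and u-1 ({u-1,u}); a loop
   (level 0) is incident twice, hence never contributes to the syndrome. *)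
Definition syndrome (j : nat) (f : pattern j) : {set 'I_(2 ^ j)} :=
  [set u : 'I_(2 ^ j) | (u \in f) (+) (modI j (u + (2 ^ j).-1) \in f)].

(* Block m at level j+1: left edge {2m,2m+1}, right edge {2m+1,2m+2}. *)
Definition left_edge (j : nat) (m : 'I_(2 ^ j)) : 'I_(2 ^ j.+1) := modI j.+1 (2 * m).
Definition right_edge (j : nat) (m : 'I_(2 ^ j)) : 'I_(2 ^ j.+1) := modI j.+1 (2 * m + 1).
Definition odd_vtx (j : nat) (m : 'I_(2 ^ j)) : 'I_(2 ^ j.+1) := modI j.+1 (2 * m + 1).
Definition even_vtx (j : nat) (m : 'I_(2 ^ j)) : 'I_(2 ^ j.+1) := modI j.+1 (2 * m + 2).

Definition reduced_pattern (j : nat) (f : pattern j.+1) : pattern j.+1 :=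
  let S := syndrome f in
  let A := [set m : 'I_(2 ^ j) | (odd_vtx m \in S) && (even_vtx m \in S)] in
  let Rflip := [set e | [exists m in A, e == right_edge m]] in
  let S1 := S :\: [set v | [exists m in A, (v == odd_vtx m) || (v == even_vtx m)]] in
  let Lflip := [set e | [exists m : 'I_(2 ^ j), (odd_vtx m \in S1) && (e == left_edge m)]] in
  [set e | (e \in f) (+) (e \in Rflip) (+) (e \in Lflip)].

Definition stage_image (j : nat) (f : pattern j.+1) : pattern j :=
  let f' := reduced_pattern f in
  [set m : 'I_(2 ^ j) | (left_edge m \in f') && (right_edge m \in f')].

(* Main.v *)
Require Import Defs.
From mathcomp Require Import all_boot zify.
Set Implicit Arguments. Unset Strict Implicit. Unset Printing Implicit Defensive.
Definition maj (a b c : bool) := [|| a && b, b && c | a && c].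

Definition Fb j (f : pattern j) k := modI j k \in f.

Lemma Fb_ord j (f : pattern j) (u : 'I_(2^j)) : (u \in f) = Fb f u.
Proof. rewrite /Fb; have -> // : modI j u = u; apply: val_inj => /=; rewrite modn_small //. Qed.

Lemma Fb_mod j (f : pattern j) k k' : k = k' %[mod 2^j] -> Fb f k = Fb f k'.
Proof. move=> h; rewrite /Fb; have -> // : modI j k = modI j k'; apply: val_inj => /=; done. Qed.

Lemma synE j (f : pattern j.+1) k :
  (modI j.+1 (k + 1) \in syndrome f) = Fb f (k + 1) (+) Fb f k.
Proof.
rewrite inE Fb_ord /Fb.
have -> : modI j.+1 (modI j.+1 (k + 1)) = modI j.+1 (k + 1).
  by apply: val_inj => /=; rewrite modn_mod.
have -> // : modI j.+1 (modI j.+1 (k + 1) + (2 ^ j.+1).-1) = modI j.+1 k.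
apply: val_inj => /=; rewrite modnDml.
have hp := pow2_gt0 j.+1.
rewrite (_ : k + 1 + (2 ^ j.+1).-1 = k + 2 ^ j.+1); last by lia.
by rewrite modnDr.
Qed.

Lemma stage_imageE j (f : pattern j.+1) (m : 'I_(2^j)) :
  (m \in stage_image f) = maj (Fb f (2*m)) (Fb f (2*m+1)) (Fb f (2*m+1+1)).
Proof.
have hm := ltn_ord m.
have hn : 2 ^ j.+1 = 2 * 2 ^ j by rewrite expnS.
have vL (m' : 'I_(2^j)) : val (left_edge m') = 2 * m'.
  by rewrite /= modn_small // hn; have := ltn_ord m'; lia.
have vR (m' : 'I_(2^j)) : val (right_edge m') = 2 * m' + 1.
  by rewrite /= modn_small // hn; have := ltn_ord m'; lia.
have vO (m' : 'I_(2^j)) : val (odd_vtx m') = 2 * m' + 1 by exact: vR.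
have vE (m' : 'I_(2^j)) : odd (val (even_vtx m')) = false.
  rewrite /= hn odd_mod; last by rewrite oddM.
  by rewrite oddD oddM.
rewrite /stage_image /reduced_pattern !inE.
set S := syndrome f.
set A := [set m0 | _ & _].
have hA (m' : 'I_(2^j)) : (m' \in A) = (odd_vtx m' \in S) && (even_vtx m' \in S) by rewrite inE.
clearbody A.
have LR : [exists m0 in A, left_edge m == right_edge m0] = false.
  apply/existsP => -[m' /andP [_ /eqP h]]; move: (congr1 val h); rewrite vL vR; lia.
have RR : [exists m0 in A, right_edge m == right_edge m0] = (m \in A).
  apply/existsP/idP => [[m' /andP [h /eqP e]]|h].
    have -> : m = m' by apply: val_inj => /=; move: (congr1 val e); rewrite !vR; lia.
    done.
  by exists m; rewrite h eqxx.
have RL : [exists m0, (odd_vtx m0 \in S :\: [set v | [exists m1 in A, (v == odd_vtx m1) || (v == even_vtx m1)]]) && (right_edge m == left_edge m0)] = false.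
  apply/existsP => -[m' /andP [_ /eqP h]]; move: (congr1 val h); rewrite vL vR; lia.
have LL : [exists m0, (odd_vtx m0 \in S :\: [set v | [exists m1 in A, (v == odd_vtx m1) || (v == even_vtx m1)]]) && (left_edge m == left_edge m0)] = (odd_vtx m \in S) && ~~ (m \in A).
  apply/existsP/idP => [[m' /andP [h /eqP e]]|h].
    have em : m = m' by apply: val_inj => /=; move: (congr1 val e); rewrite !vL; lia.
    subst m'; move: h; rewrite in_setD andbC; congr (_ && ~~ _); rewrite in_set.
    apply/existsP/idP => [[m1 /andP [h1 /orP [/eqP e1| /eqP e1]]]|h1].
    - have -> : m = m1 by apply: val_inj => /=; move: (congr1 val e1); rewrite !vO; lia.
      done.
    - move: (congr1 (fun x => odd (val x)) e1); rewrite vE vO oddD oddM /=.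
      done.
    - by exists m; rewrite h1 eqxx.
  exists m; rewrite eqxx andbT in_setD; move: h => /andP [h1 h2]; rewrite h1 andbT in_set.
  apply/existsP => -[m1 /andP [h3 /orP [/eqP e1| /eqP e1]]].
    have em : m = m1 by apply: val_inj => /=; move: (congr1 val e1); rewrite !vO; lia.
    by subst m1; rewrite h3 in h2.
  move: (congr1 (fun x => odd (val x)) e1); rewrite vE vO oddD oddM /=.
  done.
rewrite LR RR RL LL hA.
rewrite /odd_vtx /even_vtx (_ : 2 * m + 2 = 2 * m + 1 + 1); last by rewrite -addnA.
rewrite !synE -/(Fb f _).
rewrite /left_edge /right_edge -!/(Fb f _).
by case: (Fb f (2*m)); case: (Fb f (2*m+1)); case: (Fb f (2*m+1+1)).
Qed.
Definition phi (F : nat -> bool) m := F (4*m) || (F (4*m+1) && F (4*m+2)).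

Lemma local (F : nat -> bool) m :
 2 * maj (maj (F (2*(2*m))) (F (2*(2*m)+1)) (F (2*(2*m)+1+1)))
         (maj (F (2*(2*m+1))) (F (2*(2*m+1)+1)) (F (2*(2*m+1)+1+1)))
         (maj (F (2*(2*m+1+1))) (F (2*(2*m+1+1)+1)) (F (2*(2*m+1+1)+1+1))) + phi F m
 <= F (4*m) + F (4*m+1) + F (4*m+2) + F (4*m+3) + phi F (m+1).
Proof.
rewrite /phi.
rewrite (_ : 2*(2*m+1+1)+1+1 = 4*m+6); last by lia.
rewrite (_ : 2*(2*m+1+1)+1 = 4*m+5); last by lia.
rewrite (_ : 2*(2*m+1+1) = 4*m+4); last by lia.
rewrite (_ : 2*(2*m+1)+1+1 = 4*m+4); last by lia.
rewrite (_ : 2*(2*m+1)+1 = 4*m+3); last by lia.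
rewrite (_ : 2*(2*m+1) = 4*m+2); last by lia.
rewrite (_ : 2*(2*m)+1+1 = 4*m+2); last by lia.
rewrite (_ : 2*(2*m)+1 = 4*m+1); last by lia.
rewrite (_ : 2*(2*m) = 4*m); last by lia.
rewrite (_ : 4*(m+1)+2 = 4*m+6); last by lia.
rewrite (_ : 4*(m+1)+1 = 4*m+5); last by lia.
rewrite (_ : 4*(m+1) = 4*m+4); last by lia.
by case: (F (4*m)); case: (F (4*m+1)); case: (F (4*m+2)); case: (F (4*m+3));
   case: (F (4*m+4)); case: (F (4*m+5)); case: (F (4*m+6)).
Qed.

Lemma blocks (h : nat -> nat) N :
  \sum_(0 <= k < 4 * N) h k = \sum_(0 <= m < N) (h (4*m) + h (4*m+1) + h (4*m+2) + h (4*m+3)).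
Proof.
elim: N => [|N IH]; first by rewrite muln0 !big_geq.
rewrite (_ : 4 * N.+1 = (4*N).+3.+1); last by lia.
rewrite !big_nat_recr //= IH !addnA.
by rewrite !addn1 !addn2 !addn3.
Qed.

Lemma telescope (h : nat -> nat) N :
  \sum_(0 <= m < N) h (m+1) + h 0 = \sum_(0 <= m < N) h m + h N.
Proof.
elim: N => [|N IH]; first by rewrite !big_geq.
rewrite !big_nat_recr //= -addnA (addnC (h (N+1))) addnA IH addn1. lia.
Qed.

Lemma stage_imageE' j (f : pattern j.+1) k :
  Fb (stage_image f) k = maj (Fb f (2*k)) (Fb f (2*k+1)) (Fb f (2*k+1+1)).
Proof.
rewrite {1}/Fb stage_imageE (_ : nat_of_ord (modI j k) = k %% 2^j) //.
have hm c : 2 * (k %% 2 ^ j) + c = 2 * k + c %[mod 2 ^ j.+1].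
  by rewrite expnS -[in RHS]modnDml -muln_modr.
rewrite -(addnA (2 * (k %% 2^j))) -(addnA (2 * k)) (Fb_mod _ (hm (1+1))) (Fb_mod _ (hm 1)).
rewrite (Fb_mod _ (_ : 2 * (k %% 2^j) = 2*k %[mod 2^j.+1])) //.
by have := hm 0; rewrite !addn0.
Qed.

Lemma card_sum n (A : {set 'I_n}) : #|A| = \sum_(x : 'I_n) (x \in A : nat).
Proof. by rewrite -sum1_card big_mkcond /=; apply: eq_bigr => x _; case: (x \in A). Qed.

Theorem lemma3 (i : nat) (ei : pattern i) (ei2 : pattern i.+2) :
  stage_image (stage_image ei2) = ei -> 2 * wt ei <= wt ei2.
Proof.
move=> H.
set N := 2 ^ i.
set F := Fb ei2.
have h4 : 2 ^ i.+2 = 4 * N by rewrite !expnS /N mulnA.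
have W2 : wt ei2 = \sum_(0 <= k < 4 * N) F k.
  rewrite /wt card_sum -h4 big_mkord; apply: eq_bigr => x _; by rewrite Fb_ord.
pose e m := maj (maj (F (2*(2*m))) (F (2*(2*m)+1)) (F (2*(2*m)+1+1)))
         (maj (F (2*(2*m+1))) (F (2*(2*m+1)+1)) (F (2*(2*m+1)+1+1)))
         (maj (F (2*(2*m+1+1))) (F (2*(2*m+1+1)+1)) (F (2*(2*m+1+1)+1+1))).
have W0 : wt ei = \sum_(0 <= m < N) e m.
  rewrite /wt card_sum big_mkord; apply: eq_bigr => x _.
  by rewrite -H stage_imageE !stage_imageE'.
rewrite W0 W2 blocks.
pose p m := nat_of_bool (phi F m).
have T := telescope p N.
have Hp : p N = p 0.
  rewrite /p /phi; congr (nat_of_bool (_ || (_ && _))); apply: Fb_mod; rewrite h4 muln0.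
  - by rewrite mulnC modnn mod0n.
  - by rewrite mulnC modnDl.
  - by rewrite mulnC modnDl.
have L : \sum_(0 <= m < N) (2 * e m + p m) <=
         \sum_(0 <= m < N) (F (4*m) + F (4*m+1) + F (4*m+2) + F (4*m+3) + p (m+1)).
  apply: leq_sum => m _; exact: local.
have S1 : \sum_(0 <= m < N) (2 * e m + p m) = 2 * \sum_(0 <= m < N) e m + \sum_(0 <= m < N) p m.
  by rewrite big_split big_distrr.
have S2 : \sum_(0 <= m < N) (F (4*m) + F (4*m+1) + F (4*m+2) + F (4*m+3) + p (m+1)) =
  \sum_(0 <= m < N) (F (4*m) + F (4*m+1) + F (4*m+2) + F (4*m+3)) + \sum_(0 <= m < N) p (m+1).
  by rewrite big_split.
rewrite S1 S2 in L.
lia.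
Qed.
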